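(* Let $A,N\in\mathbb{R}^{m\times n}$ and let $\hat A=A+N$. Then for every positive integer $k$, $$\|A-\hat A_k\|_2\le\|A-A_k\|_2+2\|N_k\|_2,$$ $$\|A-\hat A_k\|_F\le\|A-A_k\|_F+\|N_k\|_F+2\sqrt{\|N_k\|_F\,\|A_k\|_F}.$$
   Context: For a matrix $M$, $M_k$ denotes its best rank-$k$ approximation (the truncated SVD keeping the top $k$ singular triplets). $\|\cdot\|_2$ is the spectral norm and $\|\cdot\|_F$ the Frobenius norm. *)

(* Defs.v *)
From HB Require Import structures.
From mathcomp Require Import all_boot all_order all_algebra.
From mathcomp Require Import boolp classical_sets reals.
Set Implicit Arguments. Unset Strict Implicit. Unset Printing Implicit Defensive.
Import Order.TTheory GRing.Theory Num.Theory.
Local Open Scope ring_scope.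
Local Open Scope classical_set_scope.

Definition vnorm (R : realType) (n : nat) (x : 'cV[R]_n) : R :=
  Num.sqrt (\sum_(i < n) x i 0 ^+ 2).

(* Spectral norm: operator norm induced by the Euclidean norms,
   sup of |M x|_2 over unit vectors x (sup of the empty set is 0 when n = 0). *)
Definition spec_norm (R : realType) (m n : nat) (M : 'M[R]_(m, n)) : R :=
  sup [set r : R | exists x : 'cV[R]_n, vnorm x = 1 /\ r = vnorm (M *m x)].

Definition frob_norm (R : realType) (m n : nat) (M : 'M[R]_(m, n)) : R :=
  Num.sqrt (\sum_(i < m) \sum_(j < n) M i j ^+ 2).

(* [best_rank_approx M k B] : B is a best rank-k approximation of M obtained
   by truncating an SVD of M, i.e. M = U diag(s) V^T with U, V having
   orthonormal columns and s nonnegative nonincreasing, and B keeps the top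
   k singular triplets. (Any choice of SVD is allowed.) *)
Definition best_rank_approx (R : realType) (m n : nat) (M : 'M[R]_(m, n))
    (k : nat) (B : 'M[R]_(m, n)) : Prop :=
  exists (p : nat) (U : 'M[R]_(m, p)) (V : 'M[R]_(n, p)) (s : 'I_p -> R),
    U^T *m U = 1%:M /\ V^T *m V = 1%:M /\
    (forall i, 0 <= s i) /\
    (forall i j : 'I_p, (i <= j)%N -> s j <= s i) /\
    M = U *m diag_mx (\row_i s i) *m V^T /\
    B = U *m diag_mx (\row_i (if (i < k)%N then s i else 0)) *m V^T.

(* Main.v *)
Require Import Defs.
From HB Require Import structures.
From mathcomp Require Import all_boot all_order all_algebra.
From mathcomp Require Import boolp classical_sets reals.
From mathcomp Require Import ring lra zify.
Import Order.TTheory GRing.Theory Num.Theory.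
Local Open Scope ring_scope.

Definition fsq {R : realType} {m n : nat} (M : 'M[R]_(m, n)) : R := \tr (M^T *m M).
Definition ip {R : realType} {m n : nat} (X Y : 'M[R]_(m, n)) : R := \tr (X^T *m Y).

Lemma fsqE {R : realType} {m n : nat} (M : 'M[R]_(m, n)) :
  fsq M = \sum_i \sum_j M i j ^+ 2.
Proof.
rewrite /fsq /mxtrace exchange_big /=; apply: eq_bigr => j _.
rewrite !mxE; apply: eq_bigr => i _; by rewrite !mxE expr2.
Qed.

Lemma frobE {R : realType} {m n : nat} (M : 'M[R]_(m, n)) :
  frob_norm M = Num.sqrt (fsq M).
Proof. by rewrite /frob_norm fsqE. Qed.

Lemma fsq_ge0 {R : realType} {m n : nat} (M : 'M[R]_(m, n)) : 0 <= fsq M.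
Proof. rewrite fsqE; apply: sumr_ge0 => i _; apply: sumr_ge0 => j _; exact: sqr_ge0. Qed.

Lemma fsq_tr {R : realType} {m n : nat} (M : 'M[R]_(m, n)) : fsq M^T = fsq M.
Proof. by rewrite /fsq trmxK mxtrace_mulC. Qed.

Lemma fsq_eq0 {R : realType} {m n : nat} (M : 'M[R]_(m, n)) : fsq M = 0 -> M = 0.
Proof.
rewrite fsqE => /eqP; rewrite psumr_eq0; last first.
  by move=> i _; apply: sumr_ge0 => j _; exact: sqr_ge0.
move=> /allP H; apply/matrixP => i j; rewrite mxE.
have /implyP := H i (mem_index_enum i) => /(_ isT).
rewrite psumr_eq0; last by move=> ? _; exact: sqr_ge0.
by move=> /allP /(_ j (mem_index_enum j)) /implyP /(_ isT); rewrite sqrf_eq0 => /eqP.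
Qed.

Lemma ip_sym {R : realType} {m n : nat} (X Y : 'M[R]_(m, n)) : ip X Y = ip Y X.
Proof. by rewrite /ip -mxtrace_tr trmx_mul trmxK. Qed.

Lemma trD {R : realType} {m n : nat} (X Y : 'M[R]_(m, n)) : (X + Y)^T = X^T + Y^T.
Proof. by apply/matrixP => i j; rewrite !mxE. Qed.
Lemma trZ {R : realType} {m n : nat} (a : R) (X : 'M[R]_(m, n)) : (a *: X)^T = a *: X^T.
Proof. by apply/matrixP => i j; rewrite !mxE. Qed.
Lemma trN {R : realType} {m n : nat} (X : 'M[R]_(m, n)) : (- X)^T = - X^T.
Proof. by apply/matrixP => i j; rewrite !mxE. Qed.

Lemma fsqD {R : realType} {m n : nat} (X Y : 'M[R]_(m, n)) :
  fsq (X + Y) = fsq X + fsq Y + 2 * ip X Y.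
Proof.
rewrite /fsq trD mulmxDl !mulmxDr !mxtraceD.
have -> : \tr (Y^T *m X) = ip X Y by rewrite ip_sym.
rewrite /ip; ring.
Qed.

Lemma fsqZ {R : realType} {m n : nat} (a : R) (X : 'M[R]_(m, n)) :
  fsq (a *: X) = a ^+ 2 * fsq X.
Proof. by rewrite /fsq trZ -scalemxAl -scalemxAr !mxtraceZ mulrA expr2. Qed.

Lemma fsqN {R : realType} {m n : nat} (X : 'M[R]_(m, n)) : fsq (- X) = fsq X.
Proof. by rewrite -scaleN1r fsqZ sqrrN expr1n mul1r. Qed.

Lemma ipZr {R : realType} {m n : nat} (a : R) (X Y : 'M[R]_(m, n)) :
  ip X (a *: Y) = a * ip X Y.
Proof. by rewrite /ip -scalemxAr mxtraceZ. Qed.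
Lemma ipZl {R : realType} {m n : nat} (a : R) (X Y : 'M[R]_(m, n)) :
  ip (a *: X) Y = a * ip X Y.
Proof. by rewrite ip_sym ipZr ip_sym. Qed.
Lemma ipNr {R : realType} {m n : nat} (X Y : 'M[R]_(m, n)) : ip X (- Y) = - ip X Y.
Proof. by rewrite -scaleN1r ipZr mulN1r. Qed.
Lemma ip0l {R : realType} {m n : nat} (Y : 'M[R]_(m, n)) : ip 0 Y = 0.
Proof. by rewrite /ip trmx0 mul0mx mxtrace0. Qed.

Lemma CS {R : realType} {m n : nat} (X Y : 'M[R]_(m, n)) :
  ip X Y <= Num.sqrt (fsq X) * Num.sqrt (fsq Y).
Proof.
set a := Num.sqrt (fsq X); set b := Num.sqrt (fsq Y).
have ha : a ^+ 2 = fsq X by rewrite sqr_sqrtr // fsq_ge0.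
have hb : b ^+ 2 = fsq Y by rewrite sqr_sqrtr // fsq_ge0.
have a0 : 0 <= a := sqrtr_ge0 _. have b0 : 0 <= b := sqrtr_ge0 _.
have H := fsq_ge0 (b *: X + (- a) *: Y).
rewrite fsqD !fsqZ ipZl ipZr -ha -hb in H.
have [az|anz] := eqVneq a 0.
  have : fsq X = 0 by rewrite -ha az expr2 mulr0.
  by move/fsq_eq0 => ->; rewrite ip0l; apply: mulr_ge0.
have [bz|bnz] := eqVneq b 0.
  have : fsq Y = 0 by rewrite -hb bz expr2 mulr0.
  by move/fsq_eq0 => ->; rewrite ip_sym ip0l; apply: mulr_ge0.
have ab : 0 < a * b by rewrite mulr_gt0 // lt0r ?anz ?bnz.
have : a * b * ip X Y <= a * b * (a * b) by nra.
by rewrite ler_pM2l.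
Qed.

Lemma frobD {R : realType} {m n : nat} (X Y : 'M[R]_(m, n)) :
  Num.sqrt (fsq (X + Y)) <= Num.sqrt (fsq X) + Num.sqrt (fsq Y).
Proof.
have := CS X Y.
set a := Num.sqrt (fsq X); set b := Num.sqrt (fsq Y) => H.
have ha : a ^+ 2 = fsq X by rewrite sqr_sqrtr // fsq_ge0.
have hb : b ^+ 2 = fsq Y by rewrite sqr_sqrtr // fsq_ge0.
have a0 : 0 <= a := sqrtr_ge0 _. have b0 : 0 <= b := sqrtr_ge0 _.
rewrite -[a + b]ger0_norm ?addr_ge0 // -(sqrtr_sqr (a + b)) ler_sqrt ?sqr_ge0 // fsqD -ha -hb.
nra.
Qed.

Lemma fsq_mull {R : realType} {m p n : nat} (U : 'M[R]_(m, p)) (X : 'M[R]_(p, n)) :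
  U^T *m U = 1%:M -> fsq (U *m X) = fsq X.
Proof. by move=> hU; rewrite /fsq trmx_mul -mulmxA (mulmxA U^T) hU mul1mx. Qed.

Lemma fsq_mulr {R : realType} {m p n : nat} (X : 'M[R]_(m, p)) (V : 'M[R]_(n, p)) :
  V^T *m V = 1%:M -> fsq (X *m V^T) = fsq X.
Proof.
move=> hV; rewrite /fsq trmx_mul trmxK mulmxA mxtrace_mulC.
by rewrite !mulmxA hV mul1mx.
Qed.

Definition isproj {R : realType} {n : nat} (P : 'M[R]_n) := P^T = P /\ P *m P = P.

Lemma pythag {R : realType} {m n : nat} (A : 'M[R]_(m, n)) (P : 'M[R]_n) :
  isproj P -> fsq A = fsq (A *m P) + fsq (A *m (1%:M - P)).
Proof.
move=> [hT hP].
have -> : fsq A = fsq (A *m P + A *m (1%:M - P)).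
  by rewrite mulmxBr mulmx1 addrC subrK.
rewrite fsqD; suff -> : ip (A *m P) (A *m (1%:M - P)) = 0 by rewrite mulr0 addr0.
rewrite /ip trmx_mul hT mxtrace_mulC -!mulmxA.
by rewrite (mulmxA (1%:M - P)) mulmxBl mul1mx hP subrr mul0mx mulmx0 mxtrace0.
Qed.

Lemma fsq_projr {R : realType} {m n : nat} (A : 'M[R]_(m, n)) (P : 'M[R]_n) :
  isproj P -> fsq (A *m P) <= fsq A.
Proof. by move=> hP; rewrite [X in _ <= X](pythag A P hP) lerDl fsq_ge0. Qed.

Lemma pid_sq {R : realType} {q : nat} (k : nat) :
  (pid_mx k : 'M[R]_q) *m (pid_mx k : 'M[R]_q) = pid_mx k.
Proof.
rewrite mul_pid_mx minnn; apply/matrixP => i j; rewrite !mxE leq_min ltn_ord //.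
Qed.

Lemma proj_of {R : realType} {n q : nat} (W : 'M[R]_(n, q)) (k : nat) :
  W^T *m W = 1%:M -> isproj (W *m pid_mx k *m W^T).
Proof.
move=> hW; split.
  by rewrite !trmx_mul trmxK tr_pid_mx mulmxA.
by rewrite -!mulmxA (mulmxA W^T) hW mul1mx (mulmxA (pid_mx k)) pid_sq.
Qed.

Lemma bessel {R : realType} {n p q : nat} (V : 'M[R]_(n, p)) (X : 'M[R]_(n, q)) :
  V^T *m V = 1%:M -> fsq (V^T *m X) <= fsq X.
Proof.
move=> hV; rewrite -(fsq_mull V (V^T *m X) hV) mulmxA.
have hP : isproj (V *m pid_mx p *m V^T) by exact: proj_of.
have -> : V *m V^T = V *m pid_mx p *m V^T by rewrite pid_mx_1 mulmx1.
rewrite -fsq_tr trmx_mul.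
have -> : (V *m pid_mx p *m V^T)^T = V *m pid_mx p *m V^T by case: hP.
by rewrite -[X in _ <= X]fsq_tr; apply: fsq_projr.
Qed.

Lemma count_lt {R : realType} (p k : nat) :
  \sum_(i < p) ((i < k)%N%:R : R) = (minn p k)%:R.
Proof.
elim: p => [|p IH]; first by rewrite big_ord0 min0n.
rewrite big_ord_recr /= IH -natrD; congr (_%:R).
case: ltnP => h; lia.
Qed.

Lemma rearr {R : realType} {p : nat} (a w : 'I_p -> R) (k : nat) :
  (forall i j : 'I_p, (i <= j)%N -> a j <= a i) ->
  (forall i : 'I_p, 0 <= a i) -> (forall i : 'I_p, 0 <= w i <= 1) ->
  \sum_(i < p) w i <= k%:R ->
  \sum_(i < p) a i * w i <= \sum_(i < p) (if (i < k)%N then a i else 0).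
Proof.
move=> hdec ha hw hs.
case: (ltnP k p) => hk; last first.
  apply: ler_sum => i _; rewrite (leq_trans (ltn_ord i) hk).
  have := hw i; have := ha i; nra.
set c := a (Ordinal hk).
have hc : forall i : 'I_p,
    a i * w i - (if (i < k)%N then a i else 0) <= c * (w i - (i < k)%N%:R).
  move=> i; have := hw i; have c0 : 0 <= c by apply: ha.
  case: ltnP => hi /=.
    have : c <= a i by apply: hdec; rewrite /= ltnW.
    nra.
  have : a i <= c by apply: hdec.
  nra.
have := @ler_sum _ _ (index_enum 'I_p) xpredT _ _ (fun i _ => hc i).
rewrite sumrB -mulr_sumr sumrB count_lt (minn_idPr (ltnW hk)).
have c0 : 0 <= c by apply: ha.
nra.
Qed.

Lemma pid_diag {R : realType} {q : nat} (k : nat) :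
  (pid_mx k : 'M[R]_q) = diag_mx (\row_i ((i < k)%N%:R)).
Proof.
apply/matrixP => i j; rewrite !mxE; case: (eqVneq i j) => [->|ne].
  by rewrite eqxx /= mulr1n.
have /negbTE -> : (i != j :> nat) by [].
by rewrite mulr0n.
Qed.

Lemma diag_trunc {R : realType} {p : nat} (s : 'I_p -> R) (k : nat) :
  diag_mx (\row_i (if (i < k)%N then s i else 0)) = diag_mx (\row_i s i) *m pid_mx k.
Proof.
rewrite pid_diag mulmx_diag; congr diag_mx; apply/rowP => i; rewrite !mxE.
by case: ltnP => _; rewrite ?mulr1 ?mulr0.
Qed.

Lemma fsq_diag {R : realType} {p : nat} (d : 'rV[R]_p) :
  fsq (diag_mx d) = \sum_i d 0 i ^+ 2.
Proof.
rewrite fsqE; apply: eq_bigr => i _; rewrite (bigD1 i) //= big1 ?addr0.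
  by rewrite mxE eqxx mulr1n.
by move=> j /negbTE ne; rewrite mxE eq_sym ne mulr0n expr2 mulr0.
Qed.

Lemma tr_pid_le {R : realType} {q : nat} (k : nat) :
  \tr (pid_mx k : 'M[R]_q) <= k%:R.
Proof.
rewrite /mxtrace (eq_bigr (fun i : 'I_q => ((i < k)%N%:R : R))).
  by rewrite count_lt ler_nat geq_minr.
by move=> i _; rewrite mxE eqxx.
Qed.

Definition svd {R : realType} {m n p : nat} (M : 'M[R]_(m, n)) (U : 'M[R]_(m, p))
  (V : 'M[R]_(n, p)) (s : 'I_p -> R) :=
    U^T *m U = 1%:M /\ V^T *m V = 1%:M /\
    (forall i, 0 <= s i) /\
    (forall i j : 'I_p, (i <= j)%N -> s j <= s i) /\
    M = U *m diag_mx (\row_i s i) *m V^T.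

Definition trunc {R : realType} {m n p : nat} (U : 'M[R]_(m, p))
  (V : 'M[R]_(n, p)) (s : 'I_p -> R) k :=
  U *m diag_mx (\row_i (if (i < k)%N then s i else 0)) *m V^T.

Lemma svd_proj {R : realType} {m n p : nat} (M : 'M[R]_(m, n)) U V s k :
  @svd R m n p M U V s -> M *m (V *m pid_mx k *m V^T) = trunc U V s k.
Proof.
move=> [hU [hV [_ [_ ->]]]]; rewrite /trunc diag_trunc.
by rewrite !mulmxA -(mulmxA _ V^T V) hV mulmx1.
Qed.

Lemma fsq_trunc {R : realType} {m n p : nat} (M : 'M[R]_(m, n)) U V s k :
  @svd R m n p M U V s ->
  fsq (trunc U V s k) = \sum_(i < p) (if (i < k)%N then s i ^+ 2 else 0).
Proof.
move=> [hU [hV _]]; rewrite /trunc fsq_mulr // fsq_mull // fsq_diag.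
by apply: eq_bigr => i _; rewrite mxE; case: ifP => //; rewrite expr2 mulr0.
Qed.

Lemma kyfan {R : realType} {m n p : nat} (M : 'M[R]_(m, n)) U V s k (P : 'M[R]_n) :
  @svd R m n p M U V s -> isproj P -> \tr P <= k%:R ->
  fsq (M *m P) <= fsq (trunc U V s k).
Proof.
move=> hs hP htr; rewrite (fsq_trunc _ _ _ _ k hs).
move: hs => [hU [hV [s0 [sdec eM]]]].
rewrite eM -!mulmxA fsq_mull //.
set W := V^T *m P.
have -> : fsq (diag_mx (\row_i s i) *m W) = \sum_i s i ^+ 2 * fsq (row i W).
  rewrite mul_diag_mx fsqE; apply: eq_bigr => i _; rewrite fsqE big_ord1 mulr_sumr.
  by apply: eq_bigr => j _; rewrite !mxE exprMn.
apply: rearr.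
- move=> i j hij; have := sdec i j hij; have := s0 j; nra.
- by move=> i; apply: sqr_ge0.
- move=> i; rewrite fsq_ge0 /=.
  have -> : row i W = row i V^T *m P by rewrite /W row_mul.
  apply: (le_trans (fsq_projr (row i V^T) P hP)).
  have -> : fsq (row i V^T) = (V^T *m V) i i.
    rewrite fsqE big_ord1 !mxE; apply: eq_bigr => j _; by rewrite !mxE expr2.
  by rewrite hV mxE eqxx.
- have -> : \sum_i fsq (row i W) = fsq W.
    by rewrite [RHS]fsqE; apply: eq_bigr => i _; rewrite fsqE big_ord1; apply: eq_bigr => j _; rewrite mxE.
  apply: (le_trans (bessel V P hV)).
  have [hT hPP] := hP.
  by rewrite /fsq hT hPP.
Qed.

Lemma vnormE {R : realType} {n : nat} (x : 'cV[R]_n) : vnorm x = Num.sqrt (fsq x).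
Proof. by rewrite /vnorm fsqE; congr Num.sqrt; apply: eq_bigr => i _; rewrite big_ord1. Qed.

Lemma vnorm_ge0 {R : realType} {n : nat} (x : 'cV[R]_n) : 0 <= vnorm x.
Proof. by rewrite vnormE sqrtr_ge0. Qed.

Lemma vnormZ {R : realType} {n : nat} (a : R) (x : 'cV[R]_n) :
  vnorm (a *: x) = `|a| * vnorm x.
Proof. by rewrite !vnormE fsqZ sqrtrM ?sqr_ge0 // sqrtr_sqr. Qed.

Lemma vnorm_eq0 {R : realType} {n : nat} (x : 'cV[R]_n) : vnorm x = 0 -> x = 0.
Proof.
rewrite vnormE => h; apply: fsq_eq0.
by have := sqr_sqrtr (fsq_ge0 x); rewrite h expr2 mulr0 => <-.
Qed.

Lemma vnormD {R : realType} {n : nat} (x y : 'cV[R]_n) :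
  vnorm (x + y) <= vnorm x + vnorm y.
Proof. by rewrite !vnormE frobD. Qed.

Lemma vnormN {R : realType} {n : nat} (x : 'cV[R]_n) : vnorm (- x) = vnorm x.
Proof. by rewrite !vnormE fsqN. Qed.

Lemma vnorm0 {R : realType} {n : nat} : vnorm (0 : 'cV[R]_n) = 0.
Proof. by rewrite vnormE /fsq mulmx0 mxtrace0 sqrtr0. Qed.

Lemma ip_abs {R : realType} {m n : nat} (X Y : 'M[R]_(m, n)) :
  (ip X Y) ^+ 2 <= fsq X * fsq Y.
Proof.
have h1 := CS X Y. have h2 := CS X (- Y). rewrite ipNr fsqN in h2.
have ha := sqr_sqrtr (fsq_ge0 X). have hb := sqr_sqrtr (fsq_ge0 Y).
have a0 := sqrtr_ge0 (fsq X). have b0 := sqrtr_ge0 (fsq Y).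
rewrite -ha -hb; nra.
Qed.

Lemma fsq_mulv {R : realType} {m n : nat} (M : 'M[R]_(m, n)) (x : 'cV[R]_n) :
  fsq (M *m x) <= fsq M * fsq x.
Proof.
rewrite [fsq (M *m x)]fsqE [fsq M]fsqE mulr_suml; apply: ler_sum => i _.
rewrite big_ord1.
have -> : (M *m x) i 0 = ip (row i M)^T x.
  rewrite /ip trmxK /mxtrace big_ord1 !mxE; apply: eq_bigr => j _; by rewrite !mxE.
apply: (le_trans (ip_abs _ _)); rewrite fsq_tr fsqE big_ord1.
idtac.
by rewrite le_eqVlt; apply/orP; left; apply/eqP; congr (_ * _); apply: eq_bigr => j _; rewrite mxE.
Qed.

Definition sset {R : realType} {m n : nat} (M : 'M[R]_(m, n)) :=
  [set r : R | exists x : 'cV[R]_n, vnorm x = 1 /\ r = vnorm (M *m x)]%classic.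

Lemma sset_sup {R : realType} {m n : nat} (M : 'M[R]_(m, n)) :
  (sset M !=set0)%classic -> has_sup (sset M).
Proof.
move=> ne; split => //; exists (Num.sqrt (fsq M)) => r [x [hx ->]].
rewrite vnormE ler_sqrt ?fsq_ge0 //.
have := fsq_mulv M x; have : fsq x = 1.
  by have := sqr_sqrtr (fsq_ge0 x); rewrite -vnormE hx expr1n.
by move=> ->; rewrite mulr1.
Qed.

Lemma spec_ub {R : realType} {m n : nat} (M : 'M[R]_(m, n)) (x : 'cV[R]_n) :
  vnorm (M *m x) <= spec_norm M * vnorm x.
Proof.
have [->|xnz] := eqVneq x 0; first by rewrite mulmx0 !vnorm0 mulr0.
have hpos : 0 < vnorm x.
  by rewrite lt0r vnorm_ge0 andbT; apply/eqP => /vnorm_eq0 h; rewrite h eqxx in xnz.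
set y := (vnorm x)^-1 *: x.
have hy : vnorm y = 1 by rewrite vnormZ ger0_norm ?invr_ge0 ?vnorm_ge0 // mulVf // gt_eqF.
have inS : sset M (vnorm (M *m y)) by exists y.
have := sup_upper_bound (sset_sup M (ex_intro _ _ inS : (sset M !=set0)%classic)) inS.
rewrite /y -scalemxAr vnormZ ger0_norm ?invr_ge0 ?vnorm_ge0 // -/(spec_norm M).
by rewrite mulrC -ler_pdivrMr.
Qed.

Lemma spec_le {R : realType} {m n : nat} (M : 'M[R]_(m, n)) (c : R) :
  0 <= c -> (forall x : 'cV[R]_n, vnorm (M *m x) <= c * vnorm x) ->
  spec_norm M <= c.
Proof.
move=> c0 h; rewrite /spec_norm -/(sset M).
case: (pselect (sset M !=set0)%classic) => [ne|/nonemptyPn ->]; last by rewrite sup0.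
apply: ge_sup => // r [x [hx ->]]; by have := h x; rewrite hx mulr1.
Qed.

Lemma spec_ge0 {R : realType} {m n : nat} (M : 'M[R]_(m, n)) : 0 <= spec_norm M.
Proof.
rewrite /spec_norm -/(sset M).
case: (pselect (sset M !=set0)%classic) => [ne|/nonemptyPn ->]; last by rewrite sup0.
have [r hr] := ne; have := sup_upper_bound (sset_sup M ne) hr.
apply: le_trans; move: hr => [x [_ ->]]; exact: vnorm_ge0.
Qed.

Lemma specD {R : realType} {m n : nat} (X Y : 'M[R]_(m, n)) :
  spec_norm (X + Y) <= spec_norm X + spec_norm Y.
Proof.
apply: spec_le; first by rewrite addr_ge0 ?spec_ge0.
move=> x; rewrite mulmxDl mulrDl; apply: (le_trans (vnormD _ _)).
by apply: lerD; apply: spec_ub.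
Qed.

Lemma specN {R : realType} {m n : nat} (X : 'M[R]_(m, n)) :
  spec_norm (- X) <= spec_norm X.
Proof.
apply: spec_le; first exact: spec_ge0.
by move=> x; rewrite mulNmx vnormN spec_ub.
Qed.

Lemma fsq_diag_mul {R : realType} {p q : nat} (d : 'rV[R]_p) (y : 'M[R]_(p, q)) :
  fsq (diag_mx d *m y) = \sum_i d 0 i ^+ 2 * \sum_j y i j ^+ 2.
Proof.
rewrite mul_diag_mx fsqE; apply: eq_bigr => i _; rewrite mulr_sumr.
by apply: eq_bigr => j _; rewrite mxE exprMn.
Qed.

Lemma sub_trunc {R : realType} {m n p : nat} (M : 'M[R]_(m, n)) U V s k :
  @svd R m n p M U V s ->
  M - trunc U V s k = U *m diag_mx (\row_i (if (i < k)%N then 0 else s i)) *m V^T.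
Proof.
move=> [_ [_ [_ [_ ->]]]]; rewrite /trunc -mulmxBl -mulmxBr; congr (_ *m _ *m _).
apply/matrixP => i j; rewrite !mxE -mulrnBl; congr (_ *+ _).
by case: ifP => _; rewrite ?subrr ?subr0.
Qed.

Lemma tail {R : realType} {m n p : nat} (M : 'M[R]_(m, n)) U V s k (c : R) :
  @svd R m n p M U V s -> 0 <= c -> (forall i : 'I_p, (k <= i)%N -> s i <= c) ->
  spec_norm (M - trunc U V s k) <= c.
Proof.
move=> hs c0 hc; apply: spec_le => // x.
have [hU [hV [s0 _]]] := hs.
rewrite (sub_trunc _ _ _ _ k hs) -!mulmxA !vnormE fsq_mull //.
rewrite -[c]ger0_norm // -sqrtr_sqr -sqrtrM ?sqr_ge0 // ler_sqrt; last first.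
  by rewrite mulr_ge0 ?sqr_ge0 ?fsq_ge0.
apply: (@le_trans _ _ (c ^+ 2 * fsq (V^T *m x))); last first.
  by apply: ler_wpM2l; [rewrite sqr_ge0 | apply: bessel].
rewrite fsq_diag_mul [fsq (V^T *m x)]fsqE mulr_sumr; apply: ler_sum => i _.
apply: ler_wpM2r; first by apply: sumr_ge0 => j _; rewrite sqr_ge0.
rewrite mxE; case: ltnP => hi; first by rewrite expr2 mulr0 sqr_ge0.
have := hc i hi; have := s0 i; nra.
Qed.

Lemma svd_head {R : realType} {m n p : nat} (M : 'M[R]_(m, n)) (U : 'M[R]_(m, p))
  (V : 'M[R]_(n, p)) (s : 'I_p -> R) (kk : 'I_p) (z : 'cV[R]_p) :
  U^T *m U = 1%:M -> V^T *m V = 1%:M -> M = U *m diag_mx (\row_i s i) *m V^T ->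
  0 <= s kk -> (forall i : 'I_p, (i <= kk)%N -> s kk <= s i) ->
  (forall i : 'I_p, (kk < i)%N -> z i 0 = 0) ->
  s kk * vnorm z <= vnorm (M *m (V *m z)).
Proof.
move=> hU hV -> sk hs hz.
rewrite -!mulmxA (mulmxA V^T) hV mul1mx !vnormE fsq_mull //.
rewrite -[s kk]ger0_norm // -sqrtr_sqr -sqrtrM ?sqr_ge0 // ler_sqrt; last first.
  by rewrite fsq_ge0.
rewrite fsq_diag_mul fsqE mulr_sumr; apply: ler_sum => i _.
rewrite big_ord1 mxE.
case: (leqP i kk) => hi.
  apply: ler_wpM2r; first by rewrite sqr_ge0.
  have := hs i hi; nra.
by rewrite hz // expr0n /= !mulr0.
Qed.

Lemma vnorm_gt0 {R : realType} {n : nat} (x : 'cV[R]_n) : x != 0 -> 0 < vnorm x.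
Proof. by move=> h; rewrite lt0r vnorm_ge0 andbT; apply/eqP => /vnorm_eq0 e; rewrite e eqxx in h. Qed.

Lemma vnorm_orth {R : realType} {n p : nat} (V : 'M[R]_(n, p)) (z : 'cV[R]_p) :
  V^T *m V = 1%:M -> vnorm (V *m z) = vnorm z.
Proof. by move=> hV; rewrite !vnormE fsq_mull. Qed.

Lemma rank_pid_le {R : realType} {p : nat} (k : nat) :
  (\rank (pid_mx k : 'M[R]_p) <= k)%N.
Proof.
have -> : (pid_mx k : 'M[R]_p) = pid_mx (minn k p).
  apply/matrixP => i j; rewrite !mxE leq_min ltn_ord andbT //.
by rewrite rank_pid_mx ?geq_minl ?geq_minr.
Qed.

Lemma exists_z {R : realType} {p q : nat} (G : 'M[R]_(p, q)) (k : nat) :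
  (k < q)%N -> (\rank G <= k)%N ->
  exists z : 'cV[R]_q, [/\ z != 0, pid_mx k.+1 *m z = z & G *m z = 0].
Proof.
move=> hkq hG.
set E := (pid_mx k.+1 : 'M[R]_q).
set K := kermx (E *m G^T).
have hrk : (\rank (E *m G^T) <= k)%N.
  by apply: leq_trans (mxrankM_maxr _ _) _; rewrite mxrank_tr.
have : ~~ (K <= kermx E)%MS.
  apply/negP => /mxrankS; rewrite !mxrank_ker rank_pid_mx //; lia.
case/row_subPn => i; rewrite sub_kermx => hne.
have hK : row i K *m (E *m G^T) = 0.
  by apply/eqP; rewrite -sub_kermx row_sub.
exists (row i K *m E)^T; split.
- by rewrite trmx_eq0.
- by rewrite trmx_mul tr_pid_mx mulmxA pid_sq.
- by rewrite -[G *m _]trmxK trmx_mul trmxK -mulmxA hK trmx0.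
Qed.

Lemma weyl {R : realType} {m n p q : nat} (A Ah : 'M[R]_(m, n)) U V s Uh Vh sh k
  (hk : (k < q)%N) :
  @svd R m n p A U V s -> @svd R m n q Ah Uh Vh sh ->
  sh (Ordinal hk) <= spec_norm (A - trunc U V s k) + spec_norm (Ah - A).
Proof.
move=> hA hAh; set kk := Ordinal hk.
have [hU [hV [s0 [sdec eA]]]] := hA.
have [hUh [hVh [sh0 [shdec eAh]]]] := hAh.
set G := (pid_mx k : 'M[R]_p) *m V^T *m Vh.
have hG : (\rank G <= k)%N.
  apply: leq_trans (mxrankM_maxl _ _) _; apply: leq_trans (mxrankM_maxl _ _) _.
  exact: rank_pid_le.
have [z [znz hEz hGz]] := exists_z G k hk hG.
have hz : forall i : 'I_q, (kk < i)%N -> z i 0 = 0.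
  move=> i hi; rewrite -hEz pid_diag mul_diag_mx !mxE.
  by rewrite ltnS leqNgt hi /= mul0r.
set x := Vh *m z.
have h1 := svd_head Ah Uh Vh sh kk z hUh hVh eAh (sh0 kk) (fun i hi => shdec i kk hi) hz.
have htx : trunc U V s k *m x = 0.
  by rewrite /trunc diag_trunc /x /G -!mulmxA in hGz *; rewrite hGz !mulmx0.
have hx : vnorm x = vnorm z by rewrite /x vnorm_orth.
have hpos := vnorm_gt0 z znz.
have : vnorm (Ah *m x) <= (spec_norm (A - trunc U V s k) + spec_norm (Ah - A)) * vnorm x.
  have -> : Ah *m x = (A - trunc U V s k) *m x + (Ah - A) *m x.
    by rewrite !mulmxBl htx subr0 addrC subrK.
  rewrite mulrDl; apply: (le_trans (vnormD _ _)); apply: lerD; exact: spec_ub.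
rewrite hx => h2.
by rewrite -(ler_pM2r hpos); apply: (le_trans h1).
Qed.

Lemma bra_svd {R : realType} {m n : nat} (M B : 'M[R]_(m, n)) k :
  best_rank_approx M k B ->
  exists p (U : 'M[R]_(m, p)) V s, svd M U V s /\ B = trunc U V s k.
Proof.
move=> [p [U [V [s [hU [hV [s0 [sd [eM eB]]]]]]]]].
by exists p, U, V, s; split.
Qed.

Lemma trunc0 {R : realType} {m n p : nat} (U : 'M[R]_(m, p)) (V : 'M[R]_(n, p)) (s : 'I_p -> R) :
  trunc U V s 0 = 0.
Proof.
rewrite /trunc.
have -> : diag_mx (\row_i (if (i < 0)%N then s i else 0)) = 0.
  by apply/matrixP => i j; rewrite !mxE ltn0 mul0rn.
by rewrite mulmx0 mul0mx.
Qed.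

Lemma tr_proj_of {R : realType} {n q : nat} (W : 'M[R]_(n, q)) k :
  W^T *m W = 1%:M -> \tr (W *m pid_mx k *m W^T) <= k%:R.
Proof.
move=> hW; rewrite mxtrace_mulC mulmxA hW mul1mx; exact: tr_pid_le.
Qed.

Lemma spec_tail_hat {R : realType} {m n p q : nat} (A Ah : 'M[R]_(m, n)) U V s Uh Vh sh k :
  @svd R m n p A U V s -> @svd R m n q Ah Uh Vh sh ->
  spec_norm (Ah - trunc Uh Vh sh k) <= spec_norm (A - trunc U V s k) + spec_norm (Ah - A).
Proof.
move=> hA hAh.
case: (ltnP k q) => hk.
  have W := weyl _ _ _ _ _ _ _ _ _ hk hA hAh. apply: (le_trans _ W).
  have [_ [_ [sh0 [shdec _]]]] := hAh.
  by apply: tail => // i hi; apply: shdec.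
apply: (le_trans (tail _ _ _ _ k 0 hAh _ _)) => //.
  by move=> i hi; have := ltn_ord i; lia.
by rewrite addr_ge0 ?spec_ge0.
Qed.

Lemma spec_Nk {R : realType} {m n p : nat} (N : 'M[R]_(m, n)) U V s k :
  (0 < k)%N -> @svd R m n p N U V s -> spec_norm N <= spec_norm (trunc U V s k).
Proof.
move=> hk hN; have [hU [hV [s0 [sd eN]]]] := hN.
case: (posnP p) => hp.
  have := tail _ _ _ _ 0 0 hN (lexx 0).
  rewrite trunc0 subr0 => h; apply: le_trans (h _) (spec_ge0 _).
  by move=> i; have := ltn_ord i; rewrite {2}hp.
set i0 := Ordinal hp.
have h1 : spec_norm N <= s i0.
  have := tail _ _ _ _ 0 (s i0) hN (s0 i0).
  rewrite trunc0 subr0; apply => i _; exact: sd.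
apply: (le_trans h1).
set e := (delta_mx i0 0 : 'cV[R]_p).
have enz : e != 0.
  by apply/eqP => /matrixP /(_ i0 0); rewrite !mxE !eqxx /= => /eqP; rewrite oner_eq0.
have hpos := vnorm_gt0 e enz.
have := @svd_head R m n p (trunc U V s k) U V (fun i => if (i < k)%N then s i else 0) i0 e
  hU hV erefl.
rewrite /= hk => /(_ (s0 i0)).
have hs : forall i : 'I_p, (i <= i0)%N -> s i0 <= (if (i < k)%N then s i else 0).
  by move=> i; rewrite leqn0 => /eqP hi0; rewrite hi0 hk; apply: sd; rewrite hi0.
move=> /(_ hs).
have hz : forall i : 'I_p, (i0 < i)%N -> e i 0 = 0.
  move=> i hi; rewrite mxE; have /negbTE -> : i != i0 by apply/eqP => ei; rewrite ei in hi.
  by [].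

move=> /(_ hz) h2.
have h3 := spec_ub (trunc U V s k) (V *m e).
rewrite (vnorm_orth V e hV) in h3.
by rewrite -(ler_pM2r hpos); exact: (le_trans h2 h3).
Qed.

Lemma final_arith {R : realType} (a b c X Y y yh bh nq : R) :
  0 <= a -> 0 <= b -> 0 <= c -> 0 <= X -> 0 <= Y -> 0 <= y -> 0 <= yh -> 0 <= bh -> 0 <= nq ->
  Y <= c -> nq <= c -> bh <= yh -> yh <= y + Y -> b <= bh + nq ->
  X ^+ 2 + y ^+ 2 = a ^+ 2 + b ^+ 2 ->
  X + Y <= a + c + 2 * Num.sqrt (c * b).
Proof.
move=> a0 b0 c0 X0 Y0 y0 yh0 bh0 nq0 hY hnq h1 h2 h3 hP.
set t := Num.sqrt (c * b).
have t0 : 0 <= t := sqrtr_ge0 _.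
have tt : t ^+ 2 = c * b by rewrite sqr_sqrtr // mulr_ge0.
have hy : b - 2 * c <= y by lra.
suff : X <= a + 2 * t by lra.
have hX2 : X ^+ 2 <= (a + 2 * t) ^+ 2.
  case: (lerP b (2 * c)) => hb.
    nra.
  have : (b - 2 * c) ^+ 2 <= y ^+ 2 by rewrite ler_sqr ?nnegrE; lra.
  nra.
by rewrite -ler_sqr ?nnegrE //; lra.
Qed.

Theorem mainTheorem18 (R : realType) (m n : nat) (A N : 'M[R]_(m, n)) (k : nat)
    (Ak Nk Ahatk : 'M[R]_(m, n)) :
  (0 < k)%N ->
  best_rank_approx A k Ak ->
  best_rank_approx N k Nk ->
  best_rank_approx (A + N) k Ahatk ->
  spec_norm (A - Ahatk) <= spec_norm (A - Ak) + 2 * spec_norm Nk /\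
  frob_norm (A - Ahatk) <=
    frob_norm (A - Ak) + frob_norm Nk + 2 * Num.sqrt (frob_norm Nk * frob_norm Ak).
Proof.
move=> hk /bra_svd [p [U [V [s [hA ->]]]]] /bra_svd [pn [Un [Vn [sn [hN ->]]]]]
  /bra_svd [q [Uh [Vh [sh [hAh ->]]]]].
split.
  have -> : A - trunc Uh Vh sh k = - N + (A + N - trunc Uh Vh sh k).
    by rewrite (addrC A N) addrA addKr.
  apply: (le_trans (specD _ _)).
  have h1 := spec_tail_hat _ _ _ _ _ _ _ _ k hA hAh.
  have e : A + N - A = N by rewrite addrC addKr.
  rewrite e in h1.
  have h2 := spec_Nk _ _ _ _ _ hk hN.
  have h3 := specN N.
  lra.
set P := Vh *m pid_mx k *m Vh^T.
set Q := V *m pid_mx k *m V^T.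
have hVh : Vh^T *m Vh = 1%:M by case: hAh => _ [].
have hV : V^T *m V = 1%:M by case: hA => _ [].
have hP : isproj P := proj_of _ _ hVh.
have hQ : isproj Q := proj_of _ _ hV.
have trP : \tr P <= k%:R := tr_proj_of _ _ hVh.
have trQ : \tr Q <= k%:R := tr_proj_of _ _ hV.
have eAh : trunc Uh Vh sh k = (A + N) *m P by rewrite (svd_proj _ _ _ _ k hAh).
have eA : trunc U V s k = A *m Q by rewrite (svd_proj _ _ _ _ k hA).
rewrite eAh eA !frobE.
have -> : A - (A + N) *m P = A *m (1%:M - P) + - (N *m P).
  by rewrite mulmxBr mulmx1 mulmxDl opprD addrA.
apply: (le_trans (frobD _ _)); rewrite fsqN.
have hNP := kyfan _ _ _ _ _ _ hN hP trP.
have hNQ := kyfan _ _ _ _ _ _ hN hQ trQ.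
have hAQ := kyfan _ _ _ _ _ _ hAh hQ trQ.
rewrite eAh in hAQ.
have hpyP := pythag A P hP.
have hpyQ := pythag A Q hQ.
have -> : A - A *m Q = A *m (1%:M - Q) by rewrite mulmxBr mulmx1.
have e1 : (A + N) *m P = A *m P + N *m P by rewrite mulmxDl.
have e2 : A *m Q = (A + N) *m Q + - (N *m Q) by rewrite mulmxDl addrK.
have t1 := frobD (A *m P) (N *m P). rewrite -e1 in t1.
have t2 := frobD ((A + N) *m Q) (- (N *m Q)). rewrite -e2 fsqN in t2.
apply: (final_arith _ _ _ _ _ (Num.sqrt (fsq (A *m P))) (Num.sqrt (fsq ((A + N) *m P)))
  (Num.sqrt (fsq ((A + N) *m Q))) (Num.sqrt (fsq (N *m Q)))); rewrite ?sqrtr_ge0 //.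
all: try by rewrite ler_sqrt ?fsq_ge0.
by rewrite !sqr_sqrtr ?fsq_ge0 // addrC -hpyP hpyQ addrC.
Qed.
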